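(* For all integers $n,m\ge 2$, \[ \min\{n,m\}+2\le \gamma_{2t}(K_n\Box K_m)\le 2\min\{n,m\}. \]
   Context: All graphs are finite, simple and undirected. For a graph $G=(V,E)$, a set $S\subseteq V$ is a total $2$-dominating set if every vertex of $V$ (including those in $S$) is adjacent to at least $2$ vertices of $S$. The total $2$-domination number $\gamma_{2t}(G)$ is the minimum cardinality of a total $2$-dominating set of $G$. The Cartesian product $G\Box H$ has vertex set $V(G)\times V(H)$, with $(u_1,v_1)\sim(u_2,v_2)$ iff either $u_1=u_2$ and $v_1\sim v_2$ in $H$, or $v_1=v_2$ and $u_1\sim u_2$ in $G$. $K_n$ is the complete graph on $n$ vertices. *)

(* Defs.v *)
From mathcomp Require Import all_boot.
Set Implicit Arguments. Unset Strict Implicit. Unset Printing Implicit Defensive.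

Definition simple_graph (T : finType) (e : rel T) : Prop :=
  symmetric e /\ irreflexive e.

Definition total2dom (T : finType) (e : rel T) (S : {set T}) : bool :=
  [forall v, 2 <= #|[set u in S | e v u]|].

(* Total 2-domination number: minimum cardinality of a total 2-dominating set
   (the default #|T| is only reached when no such set exists; whenever one
   exists, the full vertex set is one and the value is the true minimum). *)
Definition gamma2t (T : finType) (e : rel T) : nat :=
  \big[minn/#|T|]_(S : {set T} | total2dom e S) #|S|.

Definition K_rel (n : nat) : rel 'I_n := fun i j => i != j.

Definition cart_rel (T U : finType) (e : rel T) (f : rel U) : rel (T * U) :=
  fun x y => ((x.1 == y.1) && f x.2 y.2) || ((x.2 == y.2) && e x.1 y.1).

(* Main.v *)
Require Import Defs.
From mathcomp Require Import all_boot.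
From mathcomp Require Import zify.

Set Implicit Arguments. Unset Strict Implicit. Unset Printing Implicit Defensive.

Notation E n m := (cart_rel (@K_rel n) (@K_rel m)).

Lemma eE n m (x y : 'I_n * 'I_m) : E n m x y =
  ((x.1 == y.1) && (x.2 != y.2)) || ((x.2 == y.2) && (x.1 != y.1)).
Proof. by []. Qed.

Lemma nbr n m (v u : 'I_n * 'I_m) : E n m v u ->
  (u.1 == v.1 /\ u.2 != v.2) \/ (u.2 == v.2 /\ u.1 != v.1).
Proof.
by rewrite eE => /orP [/andP[a b]|/andP[a b]]; [left|right]; split;
  rewrite eq_sym.
Qed.

Lemma sum_rows n m (S : {set 'I_n * 'I_m}) :
  #|S| = \sum_(i < n) #|[set u in S | u.1 == i]|.
Proof.
rewrite -sum1_card (partition_big (fun u => u.1) xpredT) //=.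
by apply: eq_bigr => i _; rewrite -sum1_card; apply: eq_bigl => u; rewrite inE.
Qed.

Lemma sum_cols n m (S : {set 'I_n * 'I_m}) :
  #|S| = \sum_(j < m) #|[set u in S | u.2 == j]|.
Proof.
rewrite -sum1_card (partition_big (fun u => u.2) xpredT) //=.
by apply: eq_bigr => i _; rewrite -sum1_card; apply: eq_bigl => u; rewrite inE.
Qed.

Lemma sum_ord_ge k (F : 'I_k -> nat) (k0 : 'I_k) c :
  c <= F k0 -> (forall j, j != k0 -> 0 < F j) -> c + k - 1 <= \sum_(j < k) F j.
Proof.
move=> h0 h1.
have Hk : \sum_(j < k) 1 = k by rewrite sum1_card card_ord.
rewrite (bigD1 k0) //= in Hk.
rewrite (bigD1 k0) //=.
have : \sum_(j < k | j != k0) 1 <= \sum_(j < k | j != k0) F j.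
  by apply: leq_sum => j /h1.
move=> h; rewrite -{1}Hk addnCA addKn; exact: leq_add h0 h.
Qed.

Lemma row1 n m (S : {set 'I_n * 'I_m}) (hS : total2dom (E n m) S) (i : 'I_n) :
  #|[set u in S | u.1 == i]| = 1 -> m + 2 <= #|S|.
Proof.
move/eqP/cards1P => [x hx].
have : x \in [set u in S | u.1 == i] by rewrite hx set11.
rewrite inE => /andP [xS xi].
have uniq_row : forall u, u \in S -> u.1 == i -> u = x.
  by move=> u uS ui; apply/set1P; rewrite -hx inE uS ui.
rewrite (sum_cols S).
suff: 3 + m - 1 <= \sum_(j < m) #|[set u in S | u.2 == j]| by lia.
apply: (sum_ord_ge (k0 := x.2)).
  move/forallP: hS => /(_ x) /card_gt1P [u1 [u2 [h1 h2 h12]]].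
  rewrite !inE in h1 h2.
  move/andP: h1 => [u1S e1]; move/andP: h2 => [u2S e2].
  have col : forall u, u \in S -> E n m x u -> u.2 == x.2 /\ u != x.
    move=> u uS /nbr [[a b]|[a b]].
      have ux : u = x by apply: uniq_row => //; rewrite (eqP a).
      by rewrite ux eqxx in b.
    by split => //; apply: contraNneq b => ->.
  have [c1 d1] := col u1 u1S e1; have [c2 d2] := col u2 u2S e2.
  rewrite (cardsD1 x) inE xS eqxx /= add1n ltnS.
  by apply/card_gt1P; exists u1, u2; rewrite !inE d1 d2 u1S u2S c1 c2.
move=> j hj.
move/forallP: hS => /(_ (i, j)) /card_gt1P [u1 [u2 [h1 h2 h12]]].
rewrite !inE in h1 h2.
move/andP: h1 => [u1S e1]; move/andP: h2 => [u2S e2].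
apply/card_gt0P.
case/boolP: (u1.2 == j) => h1j; first by exists u1; rewrite inE u1S h1j.
case/boolP: (u2.2 == j) => h2j; first by exists u2; rewrite inE u2S h2j.
exfalso.
have r1 : u1 = x.
  by case: (nbr e1) => [[a _]|[a _]]; [apply: uniq_row|rewrite a in h1j].
have r2 : u2 = x.
  by case: (nbr e2) => [[a _]|[a _]]; [apply: uniq_row|rewrite a in h2j].
by rewrite r1 r2 eqxx in h12.
Qed.

Lemma col1 n m (S : {set 'I_n * 'I_m}) (hS : total2dom (E n m) S) (j : 'I_m) :
  #|[set u in S | u.2 == j]| = 1 -> n + 2 <= #|S|.
Proof.
move/eqP/cards1P => [x hx].
have : x \in [set u in S | u.2 == j] by rewrite hx set11.
rewrite inE => /andP [xS xj].
have uniq_col : forall u, u \in S -> u.2 == j -> u = x.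
  by move=> u uS ui; apply/set1P; rewrite -hx inE uS ui.
rewrite (sum_rows S).
suff: 3 + n - 1 <= \sum_(i < n) #|[set u in S | u.1 == i]| by lia.
apply: (sum_ord_ge (k0 := x.1)).
  move/forallP: hS => /(_ x) /card_gt1P [u1 [u2 [h1 h2 h12]]].
  rewrite !inE in h1 h2.
  move/andP: h1 => [u1S e1]; move/andP: h2 => [u2S e2].
  have row : forall u, u \in S -> E n m x u -> u.1 == x.1 /\ u != x.
    move=> u uS /nbr [[a b]|[a b]].
      by split => //; apply: contraNneq b => ->.
    have ux : u = x by apply: uniq_col => //; rewrite (eqP a).
    by rewrite ux eqxx in b.
  have [c1 d1] := row u1 u1S e1; have [c2 d2] := row u2 u2S e2.
  rewrite (cardsD1 x) inE xS eqxx /= add1n ltnS.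
  by apply/card_gt1P; exists u1, u2; rewrite !inE d1 d2 u1S u2S c1 c2.
move=> i hi.
move/forallP: hS => /(_ (i, j)) /card_gt1P [u1 [u2 [h1 h2 h12]]].
rewrite !inE in h1 h2.
move/andP: h1 => [u1S e1]; move/andP: h2 => [u2S e2].
apply/card_gt0P.
case/boolP: (u1.1 == i) => h1i; first by exists u1; rewrite inE u1S h1i.
case/boolP: (u2.1 == i) => h2i; first by exists u2; rewrite inE u2S h2i.
exfalso.
have r1 : u1 = x.
  by case: (nbr e1) => [[a _]|[a _]]; [rewrite a in h1i|apply: uniq_col].
have r2 : u2 = x.
  by case: (nbr e2) => [[a _]|[a _]]; [rewrite a in h2i|apply: uniq_col].
by rewrite r1 r2 eqxx in h12.
Qed.

Lemma lb n m (hn : 2 <= n) (hm : 2 <= m) (S : {set 'I_n * 'I_m})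
  (hS : total2dom (E n m) S) : minn n m + 2 <= #|S|.
Proof.
case: (boolP [exists i, #|[set u in S | u.1 == i]| == 1]).
  by move=> /existsP [i /eqP hi]; have := row1 hS hi; lia.
rewrite negb_exists => /forallP hr.
case: (boolP [exists j, #|[set u in S | u.2 == j]| == 1]).
  by move=> /existsP [j /eqP hj]; have := col1 hS hj; lia.
rewrite negb_exists => /forallP hc.
case: (boolP [forall i, 0 < #|[set u in S | u.1 == i]|]).
  move=> /forallP hall.
  have : \sum_(i < n) 2 <= #|S|.
    rewrite (sum_rows S); apply: leq_sum => i _.
    by have h1 := hall i; have /eqP h2 := hr i; lia.
  by rewrite sum_nat_const card_ord; lia.
move=> /forallPn [i]; rewrite -leqNgt leqn0 => /eqP hi0.
case: (boolP [forall j, 0 < #|[set u in S | u.2 == j]|]).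
  move=> /forallP hall.
  have : \sum_(j < m) 2 <= #|S|.
    rewrite (sum_cols S); apply: leq_sum => j _.
    by have h1 := hall j; have /eqP h2 := hc j; lia.
  by rewrite sum_nat_const card_ord; lia.
move=> /forallPn [j]; rewrite -leqNgt leqn0 => /eqP hj0.
exfalso.
move/forallP: hS => /(_ (i, j)) /card_gt1P [u1 [u2 [h1 h2 h12]]].
rewrite !inE in h1 h2; move/andP: h1 => [u1S e1].
case: (nbr e1) => [[a _]|[a _]].
  have : 0 < #|[set u in S | u.1 == i]|.
    by apply/card_gt0P; exists u1; rewrite inE u1S a.
  by rewrite hi0.
have : 0 < #|[set u in S | u.2 == j]|.
  by apply/card_gt0P; exists u1; rewrite inE u1S a.
by rewrite hj0.
Qed.

Lemma bigmin_le (I : eqType) (r : seq I) (P : pred I) (F : I -> nat) x0 i0 :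
  i0 \in r -> P i0 -> \big[minn/x0]_(i <- r | P i) F i <= F i0.
Proof.
elim: r => // a r IH; rewrite inE big_cons => /orP [/eqP <- | h] Pi0.
  by rewrite Pi0 geq_minl.
case: (P a); last exact: IH h Pi0.
exact: leq_trans (geq_minr _ _) (IH h Pi0).
Qed.

Ltac close_nb := rewrite ?inE /= ?eE /= ?xpair_eqE /=; rewrite ?eqxx /=.

Lemma ub_row n m (hn : 2 <= n) (hm : 2 <= m) : gamma2t (E n m) <= 2 * n.
Proof.
pose r0 : 'I_n := Ordinal (ltnW hn). pose r1 : 'I_n := Ordinal hn.
pose c0 : 'I_m := Ordinal (ltnW hm). pose c1 : 'I_m := Ordinal hm.
have hc : c0 != c1 by [].
have hc' : c1 != c0 by [].
pose S0 := setX [set: 'I_n] [set c0; c1].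
have hS0 : total2dom (E n m) S0.
  apply/forallP => -[i j]; apply/card_gt1P.
  pose i' := if i == r0 then r1 else r0.
  have hi' : i' != i.
    by rewrite /i'; case: (eqVneq i r0) => [->|h] //; rewrite eq_sym.
  have hi'' : i != i' by rewrite eq_sym.
  have hyps := (hc, hc', hi', hi'', j).
  case: (eqVneq j c0) => [->|hj0].
    exists (i, c1), (i', c0); close_nb.
    by rewrite ?hc ?hc' ?hi' ?hi'' /= ?orbT ?andbT;
    split => //; apply/negP => /andP[/eqP a /eqP b];
    first [by rewrite a eqxx in hi'' | by rewrite b eqxx in hc | by rewrite b eqxx in hc'].
  case: (eqVneq j c1) => [->|hj1].
    exists (i, c0), (i', c1); close_nb.
    by rewrite ?hc ?hc' ?hi' ?hi'' /= ?orbT ?andbT;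
    split => //; apply/negP => /andP[/eqP a /eqP b];
    first [by rewrite a eqxx in hi'' | by rewrite b eqxx in hc | by rewrite b eqxx in hc'].
  exists (i, c0), (i, c1); close_nb.
  by rewrite ?hc ?hc' ?hj0 ?hj1 /= ?orbT ?andbT;
    split => //; apply/negP => /andP[/eqP a /eqP b];
    first [by rewrite a eqxx in hi'' | by rewrite b eqxx in hc | by rewrite b eqxx in hc'].
apply: leq_trans (bigmin_le _ _ (mem_index_enum S0) hS0) _.
by rewrite cardsX cardsT card_ord cards2 hc mulnC.
Qed.

Lemma ub_col n m (hn : 2 <= n) (hm : 2 <= m) : gamma2t (E n m) <= 2 * m.
Proof.
pose r0 : 'I_n := Ordinal (ltnW hn). pose r1 : 'I_n := Ordinal hn.
pose c0 : 'I_m := Ordinal (ltnW hm). pose c1 : 'I_m := Ordinal hm.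
have hr : r0 != r1 by [].
have hr' : r1 != r0 by [].
pose S0 := setX [set r0; r1] [set: 'I_m].
have hS0 : total2dom (E n m) S0.
  apply/forallP => -[i j]; apply/card_gt1P.
  pose j' := if j == c0 then c1 else c0.
  have hj' : j' != j.
    by rewrite /j'; case: (eqVneq j c0) => [->|h] //; rewrite eq_sym.
  have hj'' : j != j' by rewrite eq_sym.
  have hyps := (hr, hr', hj', hj'', i).
  case: (eqVneq i r0) => [->|hi0].
    exists (r1, j), (r0, j'); close_nb.
    by rewrite ?hr ?hr' ?hj' ?hj'' /= ?orbT ?andbT;
    split => //; apply/negP => /andP[/eqP a /eqP b];
    first [by rewrite b eqxx in hj'' | by rewrite a eqxx in hr | by rewrite a eqxx in hr'].
  case: (eqVneq i r1) => [->|hi1].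
    exists (r0, j), (r1, j'); close_nb.
    by rewrite ?hr ?hr' ?hj' ?hj'' /= ?orbT ?andbT;
    split => //; apply/negP => /andP[/eqP a /eqP b];
    first [by rewrite b eqxx in hj'' | by rewrite a eqxx in hr | by rewrite a eqxx in hr'].
  exists (r0, j), (r1, j); close_nb.
  by rewrite ?hr ?hr' ?hi0 ?hi1 /= ?orbT ?andbT;
    split => //; apply/negP => /andP[/eqP a /eqP b];
    first [by rewrite b eqxx in hj'' | by rewrite a eqxx in hr | by rewrite a eqxx in hr'].
apply: leq_trans (bigmin_le _ _ (mem_index_enum S0) hS0) _.
by rewrite cardsX cardsT card_ord cards2 hr.
Qed.

Theorem lemma1 (n m : nat) (hn : 2 <= n) (hm : 2 <= m) :
  minn n m + 2 <= gamma2t (cart_rel (@K_rel n) (@K_rel m)) <= 2 * minn n m.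
Proof.
apply/andP; split.
  rewrite /gamma2t; apply: (big_ind (fun k => minn n m + 2 <= k)).
  - by rewrite card_prod !card_ord; nia.
  - by move=> x y hx hy; rewrite leq_min hx hy.
  - by move=> S; apply: lb.
have := ub_row hn hm; have := ub_col hn hm; lia.
Qed.
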